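(* Let $m\ge1$ and $A=(a_0,\ldots,a_m)$ real with $a_0,a_m\ne0$. Suppose $\omega\in\mathbb{C}$ satisfies $P_A(\omega)=0$ and $|\omega|>1$. Then for every $\varepsilon>0$ there exists $n_0$ such that for every $n>n_0$ the polynomial $U_{n,A}$ has a (complex) root $\xi$ with $\left|\xi-\tfrac12(\omega+\omega^{-1})\right|<\varepsilon$.
   Context: $U_k$ denotes the Chebyshev polynomial of the second kind, $U_k(\cos\theta)=\frac{\sin(k+1)\theta}{\sin\theta}$. For $A=(a_0,\ldots,a_m)$ real with $a_0,a_m\ne0$ and $n\ge m$, $U_{n,A}(x)=\sum_{i=0}^m a_iU_{n-i}(x)$ and $P_A(x)=\sum_{i=0}^m a_ix^{m-i}$. *)

(* Defs.v *)
From HB Require Import structures.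
From mathcomp Require Import all_boot all_order all_algebra.
Set Implicit Arguments. Unset Strict Implicit. Unset Printing Implicit Defensive.
Import Order.TTheory GRing.Theory Num.Theory.
Local Open Scope ring_scope.

(* Chebyshev polynomials of the second kind, via the standard recurrence
   U_0 = 1, U_1 = 2X, U_{k+2} = 2X U_{k+1} - U_k,
   equivalent to U_k(cos t) = sin((k+1)t)/sin t. *)
Fixpoint chebU2 (R : nzRingType) (k : nat) : {poly R} * {poly R} :=
  match k with
  | 0%N => (1, 'X *+ 2)
  | k'.+1 => let: (p, q) := chebU2 R k' in (q, 'X *+ 2 * q - p)
  end.

Definition chebU (R : nzRingType) (k : nat) : {poly R} := (chebU2 R k).1.

Definition UnA (R : nzRingType) (m : nat) (a : nat -> R) (n : nat) : {poly R} :=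
  \sum_(i < m.+1) a i *: chebU R (n - i).

Definition PA (R : nzRingType) (m : nat) (a : nat -> R) : {poly R} :=
  \sum_(i < m.+1) a i *: 'X^(m - i).

(* Main.v *)
Require Import Defs.
From HB Require Import structures.
From mathcomp Require Import all_boot all_order all_algebra.
From mathcomp Require Import ring zify.
Import Order.TTheory GRing.Theory Num.Theory.
Local Open Scope ring_scope.

Lemma chebU2_eval (R : comNzRingType) (x z w : R) k : z * w = 1 -> x *+ 2 = z + w ->
  ((chebU2 R k).1.[x] * (z - w) = z ^+ k.+1 - w ^+ k.+1) /\
  ((chebU2 R k).2.[x] * (z - w) = z ^+ k.+2 - w ^+ k.+2).
Proof.
move=> zw x2; elim: k => [|k IH] /=.
  by rewrite !hornerE -mulr2n x2; split; ring.
case: (chebU2 R k) IH => p q /= [IH1 IH2]; split => //.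
rewrite hornerD hornerN hornerM hornerMn hornerX x2 mulrBl -mulrA IH2 IH1.
have -> : z ^+ k.+1 - w ^+ k.+1 = z * w * (z ^+ k.+1 - w ^+ k.+1) by rewrite zw mul1r.
rewrite !exprS; ring.
Qed.

Lemma chebU_eval (R : comNzRingType) (x z w : R) k : z * w = 1 -> x *+ 2 = z + w ->
  (chebU R k).[x] * (z - w) = z ^+ k.+1 - w ^+ k.+1.
Proof. by move=> zw x2; case: (@chebU2_eval R x z w k zw x2). Qed.

Definition QA {R : nzRingType} (m : nat) (a : nat -> R) : {poly R} :=
  \sum_(i < m.+1) a i *: 'X^i.

Lemma UnA_eval (R : comNzRingType) m (a : nat -> R) n (x z w : R) :
  (m <= n)%N -> z * w = 1 -> x *+ 2 = z + w ->
  z ^+ n.+1 * (z - w) * (UnA m a n).[x] =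
  ('X^(2 * n + 2 - m) * PA m a - QA m a).[z].
Proof.
move=> mn zw x2.
rewrite /UnA /PA /QA hornerD hornerN hornerM hornerXn !horner_sum.
rewrite mulr_sumr big_distrr /= -sumrB; apply: eq_bigr => i _.
rewrite !hornerZ !hornerXn.
rewrite (_ : _ * _ * _ = a i * (z ^+ n.+1 * ((chebU R (n - i)).[x] * (z - w)))); last by ring.
rewrite chebU_eval //.
rewrite [X in _ = X - _]mulrCA -mulrBr.
congr (_ * _).
have im : (i <= m)%N by rewrite -ltnS.
rewrite mulrBr -exprD.
have -> : (n - i).+1 = (n.+1 - i)%N by rewrite subSn // (leq_trans im).
have -> : (n.+1 + (n.+1 - i) = 2 * n + 2 - m + (m - i))%N by lia.
congr (_ - _); first by rewrite exprD.
rewrite {1}(_ : n.+1 = i + (n.+1 - i))%N; last by lia.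
by rewrite exprD -mulrA -exprMn zw expr1n mulr1.
Qed.

Lemma bernoulli (R : numDomainType) (y : R) N : 0 <= y -> 1 + N%:R * y <= (1 + y) ^+ N.
Proof.
move=> y0; elim: N => [|N IH]; first by rewrite mul0r addr0 expr0.
rewrite exprSr; apply: le_trans (ler_wpM2r _ IH); last by rewrite addr_ge0.
rewrite -subr_ge0 (_ : _ - _ = N%:R * y * y); last by rewrite mulrS; ring.
by rewrite !mulr_ge0.
Qed.

Lemma exists_min (R : numDomainType) (x y : R) : 0 < x -> 0 < y ->
  exists z, [/\ 0 < z, z <= x & z <= y].
Proof.
move=> x0 y0; have /orP[xy|yx] := real_leVge (gtr0_real x0) (gtr0_real y0).
  by exists x.
by exists y.
Qed.

Lemma prod_bound (R : numFieldType) (om tau delta : R) (rs : seq R) :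
  0 < delta -> 0 <= tau -> (forall z, z \in rs -> delta <= `|z - om|) ->
  `|\prod_(z <- rs) (om + tau - z)| <=
  `|\prod_(z <- rs) (om - z)| * (1 + tau / delta) ^+ size rs.
Proof.
move=> d0 t0; rewrite !normr_prod; elim: rs => [|z rs IH] H.
  by rewrite !big_nil expr0 mulr1.
rewrite !big_cons /= exprS mulrACA; apply: ler_pM => //.
- by rewrite prodr_ge0.
- rewrite (_ : om + tau - z = (om - z) + tau); last by ring.
  rewrite (le_trans (ler_normD _ _)) //.
  rewrite [`|tau|]ger0_norm // mulrDr mulr1 lerD2l.
  rewrite -[X in X <= _](divfK (lt0r_neq0 d0)) mulrC.
  apply: ler_wpM2r; first exact: divr_ge0 t0 (ltW d0).
  by rewrite distrC H // mem_head.
- by apply: IH => w wr; apply: H; rewrite in_cons wr orbT.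
Qed.

Arguments exists_min {R x y}.
Arguments prod_bound {R om tau delta rs}.
Arguments bernoulli {R y} N.

Theorem theorem5p2 (C : archiClosedFieldType) (m : nat) (a : nat -> C)
    (omega : C) :
  (1 <= m)%N ->
  (forall i, (i <= m)%N -> a i \is Num.real) ->
  a 0%N != 0 -> a m != 0 ->
  (PA m a).[omega] = 0 -> 1 < `|omega| ->
  forall eps : C, 0 < eps ->
  exists n0 : nat, forall n : nat, (n0 < n)%N ->
    exists xi : C, root (UnA m a n) xi /\
      `|xi - (omega + omega^-1) / 2%:R| < eps.
Proof.
move=> m1 _ a0 am Pw Lw eps eps0.
set L : C := `|omega|.
have s0 : 0 < L - 1 by rewrite subr_gt0.
set s : C := L - 1.
have s20 : 0 < s / 2%:R by rewrite divr_gt0.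
have [d [d0 deps d1]] := exists_min eps0 ltr01.
have [de [de0 ded des]] := exists_min d0 s20.
have deeps : de <= eps := le_trans ded deps.
have de1 : de <= 1 := le_trans ded d1.
have ss2 : s / 2%:R <= s.
  by rewrite -subr_ge0 (_ : s - s / 2%:R = s / 2%:R) ?ltW //; field.
set P := PA m a.
set Q := QA m a.
have Pnz : P != 0.
  apply/eqP => P0; move/eqP: a0; apply.
  have : P`_m = 0 by rewrite P0 coef0.
  rewrite /P /PA coef_sum.
  under eq_bigr => i _ do rewrite coefZ coefXn.
  rewrite big_ord_recl subn0 eqxx mulr1 big1 ?addr0 // => i _.
  by rewrite gtn_eqF ?mulr0 // ltn_subrL m1.
set T := de * (s / 4%:R).
have s40 : 0 < s / 4%:R by rewrite divr_gt0.
have T0 : 0 < T by rewrite mulr_gt0.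
have [j Pj] : exists j : nat, ~~ root P (omega + T / (j.+1)%:R).
  pose rs := [seq omega + T / (j.+1)%:R | j <- iota 0 (size P)].
  have : ~~ all (root P) rs.
    apply/negP => allr; have := max_poly_roots Pnz allr.
    rewrite map_inj_in_uniq ?iota_uniq ?size_map ?size_iota ?ltnn //.
      by move=> /(_ isT).
    move=> j k _ _ /addrI /(mulfI (lt0r_neq0 T0)) /invr_inj /eqP.
    by rewrite eqr_nat => /eqP [].
  by case/allPn => _ /mapP [j _ ->] h; exists j.
set tau := T / (j.+1)%:R.
have tau0 : 0 < tau by rewrite divr_gt0 ?ltr0Sn.
have tauT : tau <= T.
  rewrite ler_pdivrMr ?ltr0Sn //; apply: ler_peMr; [exact: ltW | by rewrite ler1n].
set b := 1 + tau / de.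
have b1 : 1 <= b by rewrite lerDl divr_ge0 ?ltW.
have b0 : 0 < b := lt_le_trans ltr01 b1.
set h := s / 2%:R.
have rb : b + h <= `|omega + tau|.
  apply: le_trans (lerB_normD _ _); rewrite (ger0_norm (ltW tau0)).
  rewrite -subr_ge0 (_ : L - tau - (b + h) = s / 2%:R - (tau + tau / de)); last first.
    by rewrite /b /h /s; field; rewrite lt0r_neq0.
  rewrite subr_ge0 (_ : s / 2%:R = s / 4%:R + s / 4%:R); last by field.
  apply: lerD.
    by apply: le_trans tauT _; apply: ler_piMl; [exact: ltW | exact: de1].
  have h1 : tau / de <= T / de.
    by apply: ler_wpM2r => //; rewrite invr_ge0 ltW.
  apply: le_trans h1 _.
  by rewrite /T mulrC mulKf ?lt0r_neq0.
have h0 : 0 < h by [].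
set y := h / b.
have y0 : 0 < y by rewrite divr_gt0.
have by1 : b * (1 + y) = b + h by rewrite /y; field; rewrite lt0r_neq0.
set c := `|P.[omega + tau]|.
have c0 : 0 < c by rewrite normr_gt0 -rootE.
set K := `|Q.[omega + tau]| + `|Q.[omega]| * b ^+ m.
have K0 : 0 <= K by rewrite addr_ge0 // mulr_ge0 // exprn_ge0 // ltW.
have yc0 : 0 < y * c by rewrite mulr_gt0.
exists (maxn m (Num.Def.archi_bound (K / (y * c)))) => n.
rewrite gtn_max => /andP [mn bn].
have mn' : (m <= n)%N by apply: ltnW.
set N := (2 * n + 2 - m)%N.
have NK : K < N%:R * (y * c).
  rewrite -ltr_pdivrMr //; apply: lt_le_trans (archi_boundP _) _.
    by rewrite divr_ge0 // ltW.
  move: bn; set B := Num.Def.archi_bound _ => bn.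
  rewrite ler_nat /N; clear -bn mn'; lia.
pose F : {poly C} := 'X^N * P - Q.
have [rs Frs] := closed_field_poly_normal F.
have [/hasP [rho rhors rhod] | hno] := boolP (has (fun z => `|z - omega| < de) rs).
  have Frho : F.[rho] = 0.
    rewrite Frs hornerZ horner_prod; apply/eqP; rewrite mulf_eq0 prodf_seq_eq0.
    by apply/orP; right; apply/hasP; exists rho => //=; rewrite hornerXsubC subrr.
  have rho1 : 1 < `|rho|.
    have e1 : L - `|omega - rho| <= `|rho|.
      by rewrite (le_trans (lerB_dist _ (omega - rho))) // subKr.
    apply: lt_le_trans e1; rewrite -subr_gt0.
    rewrite (_ : L - `|omega - rho| - 1 = s - `|omega - rho|); last by rewrite /s; ring.
    rewrite subr_gt0 distrC; apply: lt_le_trans rhod _.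
    exact: le_trans des ss2.
  have rho0 : rho != 0 by rewrite -normr_gt0 (lt_trans ltr01).
  set w := rho^-1.
  have zw : rho * w = 1 by rewrite divff.
  set x := (rho + w) / 2%:R.
  have x2 : x *+ 2 = rho + w by rewrite -mulr_natr divfK ?pnatr_eq0.
  have E := @UnA_eval C m a n x rho w mn' zw x2.
  rewrite -/P -/Q -/N -/F Frho in E.
  have rw0 : rho - w != 0.
    rewrite subr_eq0; apply/eqP => eq.
    have : `|rho * w| = 1 by rewrite zw normr1.
    rewrite -eq normrM => h2.
    have : 1 < `|rho| * `|rho|.
      exact: (lt_le_trans rho1 (ler_peMr (normr_ge0 _) (ltW rho1))).
    by rewrite h2 ltxx.
  exists x; split.
    move/eqP: E; rewrite /root !mulf_eq0 expf_eq0 (negbTE rho0) andbF (negbTE rw0) /=.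
    done.
  have om0 : omega != 0 by rewrite -normr_gt0 (lt_trans ltr01).
  rewrite (_ : x - (omega + omega^-1) / 2%:R = ((rho - omega) + (w - omega^-1)) / 2%:R); last first.
    by rewrite /x; field.
  have wd : `|w - omega^-1| <= `|rho - omega|.
    rewrite (_ : w - omega^-1 = (omega - rho) / (rho * omega)); last first.
      by rewrite /w; field; rewrite rho0 om0.
    rewrite normrM normfV normrM distrC ler_pdivrMr ?mulr_gt0 ?normr_gt0 //.
    apply: ler_peMr; first exact: normr_ge0.
    exact: le_trans (ltW rho1) (ler_peMr (normr_ge0 _) (ltW Lw)).
  apply: le_lt_trans _ (lt_le_trans rhod deeps).
  rewrite normrM normfV normr_nat ler_pdivrMr ?ltr0n //.
  apply: le_trans (ler_normD _ _) _.
  by rewrite mulr_natr mulr2n lerD2l.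
exfalso.
have far : forall z, z \in rs -> de <= `|z - omega|.
  move=> z zr; rewrite (real_leNgt (gtr0_real de0) (normr_real _)).
  by apply/negP => lt; move/hasP: hno; apply; exists z.
have Pw' : P.[omega] = 0 := Pw.
have Fw : F.[omega] = - Q.[omega].
  by rewrite /F hornerD hornerN hornerM hornerXn Pw' mulr0 add0r.
have Fev : forall t, F.[t] = lead_coef F * \prod_(z <- rs) (t - z).
  move=> t; rewrite {1}Frs hornerZ horner_prod.
  by under eq_bigr => z0 _ do rewrite hornerXsubC.
have sP : (size P <= m.+1)%N.
  rewrite /P /PA; apply: (big_ind (fun p : {poly C} => size p <= m.+1)%N).
  - by rewrite size_poly0.
  - by move=> p q hp hq; rewrite (leq_trans (size_add _ _)) // geq_max hp hq.
  - by move=> i _; rewrite (leq_trans (size_scale_leq _ _)) // size_polyXn ltnS leq_subr.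
have sQ : (size Q <= m.+1)%N.
  rewrite /Q /QA; apply: (big_ind (fun p : {poly C} => size p <= m.+1)%N).
  - by rewrite size_poly0.
  - by move=> p q hp hq; rewrite (leq_trans (size_add _ _)) // geq_max hp hq.
  - by move=> i _; rewrite (leq_trans (size_scale_leq _ _)) // size_polyXn.
have sF : (size F <= (N + m).+1)%N.
  rewrite /F (leq_trans (size_add _ _)) // geq_max size_opp (leq_trans sQ) ?andbT; last first.
    by rewrite ltnS leq_addl.
  rewrite (leq_trans (size_polyMleq _ _)) // size_polyXn.
  by rewrite addSn /= -addnS leq_add2l.
have up : `|F.[omega + tau]| <= `|Q.[omega]| * b ^+ (N + m).
  have [F0|F0] := eqVneq F 0.
    by rewrite F0 horner0 normr0 mulr_ge0 // exprn_ge0 // ltW.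
  have B := prod_bound de0 (ltW tau0) far.
  rewrite Fev normrM; apply: le_trans (ler_wpM2l (normr_ge0 _) B) _.
  rewrite mulrA -normrM -Fev Fw normrN.
  apply: ler_wpM2l; first exact: normr_ge0.
  apply: ler_weXn2l => //.
  have : size F = (size rs).+1.
    by rewrite {1}Frs size_scale ?lead_coef_eq0 // size_prod_XsubC.
  by move=> e; rewrite -ltnS -e.
have low : `|omega + tau| ^+ N * c - `|Q.[omega + tau]| <= `|F.[omega + tau]|.
  rewrite /F /c hornerD hornerN hornerM hornerXn -normrX -normrM -(normrN (Q.[_])).
  exact: lerB_normD.
set r := `|omega + tau|.
set Q1 := `|Q.[omega + tau]|.
set Q0 := `|Q.[omega]|.
have bN0 : 0 < b ^+ N by rewrite exprn_gt0.
have bN1 : 1 <= b ^+ N by rewrite exprn_ege1.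
have e1 : (b + h) ^+ N <= r ^+ N.
  by apply: lerXn2r; rewrite // nnegrE ?normr_ge0 // ltW // addr_gt0.
have e2 : b ^+ N * (1 + N%:R * y) <= (b + h) ^+ N.
  rewrite -by1 exprMn; apply: ler_wpM2l; first exact: ltW.
  exact: bernoulli (ltW y0).
have c1 : b ^+ N * K < b ^+ N * (N%:R * (y * c)) by rewrite ltr_pM2l.
have c2 : b ^+ N * (N%:R * (y * c)) <= r ^+ N * c.
  apply: le_trans (ler_wpM2r (ltW c0) (le_trans e2 e1)).
  rewrite -[X in _ <= X]mulrA; apply: ler_wpM2l; first exact: ltW.
  rewrite [X in X <= _]mulrA; apply: ler_wpM2r; first exact: ltW.
  by rewrite lerDr.
have c3 : r ^+ N * c <= b ^+ N * K.
  have := le_trans low up; rewrite lerBlDr => h3; apply: le_trans h3 _.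
  rewrite /K mulrDr exprD addrC; apply: lerD.
    exact: ler_peMl (normr_ge0 _) bN1.
  by rewrite mulrCA.
by have := lt_le_trans c1 (le_trans c2 c3); rewrite ltxx.
Qed.
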